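(* Consider the TVFJ dynamics described in the context. For every $t\in\mathbb N$, $t\ge1$, the matrix \[ \Sigma[t]:=\sum_{\tau=0}^{t-1}\Phi(t,\tau+1)\,(I-\Lambda[\tau]) \] is row-substochastic, i.e., it has entries in $[0,1]$ and each of its row sums is at most $1$.
   Context: There are $n$ agents with opinions $\mathbf x[t]\in\mathbb R^n$ and innate opinions $\mathbf s\in[0,1]^n$, evolving by $\mathbf x[t+1]=\Lambda[t]W[t]\mathbf x[t]+(I-\Lambda[t])\mathbf s$, where $W[t]\in\mathbb R^{n\times n}$ is row-stochastic (nonnegative entries, rows summing to 1) and $\Lambda[t]=\mathrm{diag}(\lambda_1[t],\dots,\lambda_n[t])$ with $\lambda_i[t]\in[0,1]$. The state transition matrix is $\Phi(t,\tau)=\Lambda[t-1]W[t-1]\cdots\Lambda[\tau]W[\tau]$ for $t>\tau$ and $\Phi(\tau,\tau)=I$. *)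

(* Defs.v *)
From HB Require Import structures.
From mathcomp Require Import all_boot all_order all_algebra.
Set Implicit Arguments. Unset Strict Implicit. Unset Printing Implicit Defensive.
Import Order.TTheory GRing.Theory Num.Theory.
Local Open Scope ring_scope.

Definition row_stochastic (R : realFieldType) (n : nat) (A : 'M[R]_n) : Prop :=
  (forall i j, 0 <= A i j) /\ (forall i, \sum_j A i j = 1).

Definition row_substochastic (R : realFieldType) (n : nat) (A : 'M[R]_n) : Prop :=
  (forall i j, 0 <= A i j <= 1) /\ (forall i, \sum_j A i j <= 1).

Definition Lam (R : realFieldType) (n : nat) (lam : nat -> 'I_n -> R) (t : nat)
  : 'M[R]_n := diag_mx (\row_i lam t i).

(* State transition matrix:
   Phi(t,tau) = Lambda[t-1] W[t-1] ... Lambda[tau] W[tau] for t > tau,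
   Phi(tau,tau) = I  (and, by convention, I for t < tau, never used). *)
Fixpoint Phi (R : realFieldType) (n : nat) (W : nat -> 'M[R]_n)
  (lam : nat -> 'I_n -> R) (t tau : nat) {struct t} : 'M[R]_n :=
  match t with
  | 0 => 1%:M
  | t'.+1 => if (tau <= t')%N
             then (Lam lam t' *m W t') *m Phi W lam t' tau
             else 1%:M
  end.

Definition Sigma (R : realFieldType) (n : nat) (W : nat -> 'M[R]_n)
  (lam : nat -> 'I_n -> R) (t : nat) : 'M[R]_n :=
  \sum_(0 <= tau < t) Phi W lam t tau.+1 *m (1%:M - Lam lam tau).

(* Main.v *)
Require Import Defs.
From HB Require Import structures.
From mathcomp Require Import all_boot all_order all_algebra.
Import Order.TTheory GRing.Theory Num.Theory.
Local Open Scope ring_scope.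

Lemma Sigma_step (R : realFieldType) (n : nat) (W : nat -> 'M[R]_n)
  (lam : nat -> 'I_n -> R) (t : nat) :
  Sigma W lam t.+1 = (Lam lam t *m W t) *m Sigma W lam t + (1%:M - Lam lam t).
Proof.
rewrite /Sigma big_nat_recr //=.
idtac.
rewrite [in X in _ + X]/= ltnn mul1mx; congr (_ + _).
rewrite mulmx_sumr; apply: eq_big_nat => tau /andP [_ Ht].
by rewrite Ht mulmxA.
Qed.

Definition P {R : realFieldType} {n : nat} (A : 'M[R]_n) :=
  (forall i j, 0 <= A i j) /\ (forall i, \sum_j A i j <= 1).

Lemma P_step (R : realFieldType) (n : nat) (Wt : 'M[R]_n) (l : 'I_n -> R)
  (hW : row_stochastic Wt) (hl : forall i, 0 <= l i <= 1) (A : 'M[R]_n) :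
  P A -> P ((diag_mx (\row_i l i) *m Wt) *m A + (1%:M - diag_mx (\row_i l i))).
Proof.
move=> [A0 A1]; case: hW => [W0 W1].
have E : forall i j, ((diag_mx (\row_i l i) *m Wt) *m A + (1%:M - diag_mx (\row_i l i))) i j
   = l i * (\sum_k Wt i k * A k j) + (i == j)%:R * (1 - l i).
  move=> i j; rewrite mxE -mulmxA mul_diag_mx !mxE.
  by congr (_ + _); case: eqP => [->|_]; rewrite ?mulr1n ?mulr0n ?mul1r ?mul0r ?subr0.
split.
  move=> i j; rewrite E; have := hl i => /andP [l0 l1].
  apply: addr_ge0; first by apply: mulr_ge0 => //; apply: sumr_ge0 => k _; apply: mulr_ge0.
  by apply: mulr_ge0; rewrite ?ler0n ?subr_ge0.
move=> i; under eq_bigr => j _ do rewrite E.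
rewrite big_split /= -big_distrr /= exchange_big /=.
under eq_bigr => k _ do rewrite -big_distrr /=.
have D : \sum_(j < n) (i == j)%:R = 1 :> R.
  rewrite (bigD1 i) //= eqxx big1 ?addr0 // => j ji.
  by rewrite eq_sym (negPf ji).
rewrite -big_distrl /= D mul1r.
have := hl i => /andP [l0 l1].
have H : \sum_k Wt i k * \sum_j A k j <= 1.
  rewrite -(W1 i); apply: ler_sum => k _.
  by rewrite -{2}(mulr1 (Wt i k)); apply: ler_wpM2l.
have := ler_wpM2l l0 H; rewrite mulr1 => H2.
by rewrite -lerBrDr; apply: le_trans H2 _; rewrite opprB addrC subrK lexx.
Qed.

Lemma P_Sigma (R : realFieldType) (n : nat) (W : nat -> 'M[R]_n)
  (lam : nat -> 'I_n -> R)
  (hW : forall t, row_stochastic (W t))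
  (hlam : forall t i, 0 <= lam t i <= 1) t : P (Sigma W lam t).
Proof.
elim: t => [|t IH].
  rewrite /Sigma big_geq //; split => [i j|i]; rewrite ?mxE //.
  by rewrite big1 ?ler01 // => j _; rewrite mxE.
by rewrite Sigma_step; apply: P_step.
Qed.

Theorem lemma4 (R : realFieldType) (n : nat) (W : nat -> 'M[R]_n)
  (lam : nat -> 'I_n -> R)
  (hW : forall t, row_stochastic (W t))
  (hlam : forall t i, 0 <= lam t i <= 1)
  (t : nat) (ht : (1 <= t)%N) :
  row_substochastic (Sigma W lam t).
Proof.
have [H0 H1] := @P_Sigma R n W lam hW hlam t.
split => // i j; rewrite H0 /=; apply: le_trans (H1 i).
rewrite (bigD1 j) //= lerDl; apply: sumr_ge0 => k _; exact: H0.
Qed.
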